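(* Let $d\geq 1$, let $p\in[1,\infty)\setminus\{2\}$, let $\beta>0$, and let $\bm{Q}_1,\bm{Q}_2$ be $d\times d$ symmetric positive definite matrices. Define $$\bm{Q}(\beta)=\left(1+\frac{1}{\beta}\right)^{1/p}\bm{Q}_1+(1+\beta)^{1/p}\bm{Q}_2 .$$ Then $\mathcal{E}(\bm{0},\bm{Q}(\beta))\supseteq \mathcal{E}(\bm{0},\bm{Q}_1)+_p\mathcal{E}(\bm{0},\bm{Q}_2)$.
   Context: For $\bm{q}\in\mathbb{R}^d$ and a symmetric positive definite $d\times d$ matrix $\bm{Q}$, the ellipsoid is $\mathcal{E}(\bm{q},\bm{Q})=\{\bm{x}\in\mathbb{R}^d:(\bm{x}-\bm{q})^\top\bm{Q}^{-1}(\bm{x}-\bm{q})\leq 1\}$. The support function of a compact convex set $\mathcal{K}\subset\mathbb{R}^d$ is $h_{\mathcal{K}}(\bm{y})=\sup\{\langle\bm{x},\bm{y}\rangle:\bm{x}\in\mathcal{K}\}$, $\bm{y}\in\mathbb{R}^d$; it determines $\mathcal{K}$ uniquely. For compact convex sets $\mathcal{K}_1,\mathcal{K}_2\subset\mathbb{R}^d$ and $1\le p<\infty$, the (Firey) $p$-sum $\mathcal{K}_1+_p\mathcal{K}_2$ is the compact convex set whose support function is $h(\bm{y})=\left(h_{\mathcal{K}_1}^p(\bm{y})+h_{\mathcal{K}_2}^p(\bm{y})\right)^{1/p}$. (For $\mathcal{E}(\bm{0},\bm{Q})$ one has $h(\bm{y})=\sqrt{\bm{y}^\top\bm{Q}\bm{y}}\ge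 0$.) *)

(* Defs.v *)
From HB Require Import structures.
From mathcomp Require Import all_boot all_order all_algebra.
From mathcomp Require Import all_classical all_reals all_analysis.
Set Implicit Arguments. Unset Strict Implicit. Unset Printing Implicit Defensive.
Import Order.TTheory GRing.Theory Num.Theory.
Import numFieldNormedType.Exports.
Local Open Scope classical_set_scope.
Local Open Scope ring_scope.

Section Defs.
Variables (R : realType) (d : nat).

Definition dotv (x y : 'cV[R]_d) : R := (x^T *m y) ord0 ord0.

Definition sym_pd (Q : 'M[R]_d) : Prop :=
  Q^T = Q /\ (forall x : 'cV[R]_d, x != 0 -> 0 < (x^T *m Q *m x) ord0 ord0).

Definition ellipsoid (q : 'cV[R]_d) (Q : 'M[R]_d) : set 'cV[R]_d :=
  [set x | ((x - q)^T *m invmx Q *m (x - q)) ord0 ord0 <= 1].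

Definition support_fun (K : set 'cV[R]_d) (y : 'cV[R]_d) : R :=
  sup [set dotv x y | x in K].

Definition convex_set (K : set 'cV[R]_d) : Prop :=
  forall x y, K x -> K y -> forall t : R, 0 <= t <= 1 ->
    K (t *: x + (1 - t) *: y).

Definition is_firey_psum (p : R) (K1 K2 K : set 'cV[R]_d) : Prop :=
  [/\ compact K, convex_set K &
      forall y, support_fun K y =
        powR (powR (support_fun K1 y) p + powR (support_fun K2 y) p) p^-1].

End Defs.

(* Main.v *)
Require Import Defs.
From HB Require Import structures.
From mathcomp Require Import all_boot all_order all_algebra.
From mathcomp Require Import all_classical all_reals all_analysis.
From mathcomp Require Import ring lra.
Import Order.TTheory GRing.Theory Num.Theory.
Import numFieldNormedType.Exports.
Local Open Scope classical_set_scope.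
Local Open Scope ring_scope.
Section S.
Variable R : realType.
Local Open Scope convex_scope.

Lemma powR2 (h : R) : 0 <= h -> h `^ 2 = h ^+ 2.
Proof. by move=> h0; rewrite -powR_mulrn. Qed.

Lemma hp2 (h p : R) : 0 <= h -> 0 < p -> (h `^ p) `^ (p^-1 * 2) = h ^+ 2.
Proof.
move=> h0 p0; rewrite -powRrM mulrA mulfV ?gt_eqF // mul1r powR2 //.
Qed.

Lemma superadd (A B q : R) : 0 <= A -> 0 <= B -> 1 <= q ->
  A `^ q + B `^ q <= (A + B) `^ q.
Proof.
move=> A0 B0 q1.
have q0 : q != 0 by rewrite gt_eqF // (lt_le_trans _ q1).
have key : forall X Y : R, 0 <= X -> 0 <= Y -> X `^ q <= X / (X + Y) * (X + Y) `^ q.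
  move=> X Y X0 Y0; have [->|Xp] := eqVneq X 0; first by rewrite powR0 // mul0r.
  have XY : 0 < X + Y by rewrite ltr_wpDr // lt0r Xp.
  rewrite {1}(_ : X = X / (X + Y) * (X + Y)); last by rewrite divfK // gt_eqF.
  apply: ge1r_powRZ => //; last exact: ltW.
  rewrite divr_gt0 ?lt0r ?Xp //=.
  - by rewrite ler_pdivrMr // mul1r lerDl.
  - by rewrite gt_eqF // ltW.
have [AB0|ABp] := eqVneq (A + B) 0.
  have [-> ->] : A = 0 /\ B = 0 by split; lra.
  by rewrite powR0 // addr0.
apply: le_trans (lerD (key A B A0 B0) (key B A B0 A0)) _.
rewrite (addrC B A) -mulrDl -mulrDl divff // mul1r //.
Qed.

Lemma term_bound (w h p : R) : 1 <= w -> 0 <= h -> 1 <= p ->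
  w^-1 * (w * h `^ p) `^ (p^-1 * 2) <= w `^ p^-1 * h ^+ 2.
Proof.
move=> w1 h0 p1.
have p0 : 0 < p by apply: lt_le_trans p1.
have w0 : 0 < w by apply: lt_le_trans w1.
rewrite powRM ?(ltW w0) ?powR_ge0 //.
rewrite hp2 // [in X in X <= _]mulrA.

apply: ler_wpM2r; first exact: sqr_ge0.
have -> : p^-1 * 2 = (p^-1 * 2 - 1) + 1 by rewrite subrK.
rewrite powRD; last by apply/implyP => _; rewrite gt_eqF.
rewrite powRr1 ?(ltW w0) // mulrCA mulVf ?gt_eqF // mulr1.
apply: ler_powR => //.
have : p^-1 <= 1 by rewrite invf_le1.
lra.
Qed.

Lemma scalar_ineq (p beta h1 h2 : R) : 1 <= p -> 0 < beta -> 0 <= h1 -> 0 <= h2 ->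
  (h1 `^ p + h2 `^ p) `^ (p^-1 * 2) <=
  (1 + beta^-1) `^ p^-1 * h1 ^+ 2 + (1 + beta) `^ p^-1 * h2 ^+ 2.
Proof.
move=> p1 b0 h10 h20.
have p0 : 0 < p by apply: lt_le_trans p1.
set u := 1 + beta^-1; set v := 1 + beta.
have u1 : 1 <= u by rewrite /u lerDl invr_ge0 ltW.
have v1 : 1 <= v by rewrite /v lerDl ltW.
have ua : 1 <= u `^ p^-1.
  by rewrite -(powRr0 u) ler_powR // invr_ge0 ltW.
have va : 1 <= v `^ p^-1.
  by rewrite -(powRr0 v) ler_powR // invr_ge0 ltW.
have [p2|p2] := leP p 2.
-
  have r1 : 1 <= p^-1 * 2 by rewrite ler_pdivlMl // mulr1.
  have u0 : 0 < u by apply: lt_le_trans u1.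
  have v0 : 0 < v by apply: lt_le_trans v1.
  have uv : 1 - u^-1 = v^-1.
    rewrite /u /v; field.
    by rewrite !gt_eqF // ?addr_gt0 // ?invr_gt0 //; move: b0; lra.
  have t0 : 0 <= u^-1 by rewrite invr_ge0 ltW.
  have t1 : u^-1 <= 1 by rewrite invf_le1.
  have X0 : 0 <= u * h1 `^ p by rewrite mulr_ge0 ?powR_ge0 // ltW.
  have Y0 : 0 <= v * h2 `^ p by rewrite mulr_ge0 ?powR_ge0 // ltW.
  have -> : h1 `^ p + h2 `^ p = u^-1 * (u * h1 `^ p) + (1 - u^-1) * (v * h2 `^ p).
    by rewrite uv !mulrA !mulVf ?gt_eqF // !mul1r.
  have conv : (u^-1 * (u * h1 `^ p) + (1 - u^-1) * (v * h2 `^ p)) `^ (p^-1 * 2) <=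
     u^-1 * (u * h1 `^ p) `^ (p^-1 * 2) + (1 - u^-1) * (v * h2 `^ p) `^ (p^-1 * 2).
    by apply: (convex_powR r1 (Itv01 t0 t1)); rewrite inE /= in_itv /= andbT.
  apply: le_trans conv _.
  apply: lerD; first exact: term_bound.
  rewrite uv; exact: term_bound.
- have q1 : 1 <= p / 2 by rewrite ler_pdivlMr // mul1r ltW.
  have -> : h1 `^ p + h2 `^ p = (h1 ^+ 2) `^ (p / 2) + (h2 ^+ 2) `^ (p / 2).
    rewrite -!powR2 // -!powRrM.
    by have -> : 2 * (p / 2) = p by rewrite mulrC divfK // pnatr_eq0.
  apply: (@le_trans _ _ (h1 ^+ 2 + h2 ^+ 2)); last first.
    by apply: lerD; rewrite ler_peMl // sqr_ge0.
  have r0 : 0 <= p^-1 * 2 by rewrite mulr_ge0 // invr_ge0 ltW.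
  have s0 : 0 <= h1 ^+ 2 by exact: sqr_ge0.
  have s1 : 0 <= h2 ^+ 2 by exact: sqr_ge0.
  have H := ge0_ler_powR r0 _ _ (superadd _ _ _ s0 s1 q1).
  apply: le_trans (H _ _) _.
  - by rewrite nnegrE addr_ge0 // powR_ge0.
  - by rewrite nnegrE powR_ge0.
  rewrite -powRrM (_ : p / 2 * (p^-1 * 2) = 1) ?powRr1 ?addr_ge0 //.
  by field; rewrite gt_eqF.
Qed.
End S.
Section M.
Variables (R : realType) (d : nat).
Implicit Types (Q : 'M[R]_d) (u v w x y : 'cV[R]_d).

Definition Bf Q u v : R := (u^T *m Q *m v) ord0 ord0.

Lemma tr11 (A : 'M[R]_1) : A ord0 ord0 = A^T ord0 ord0.
Proof. by rewrite mxE. Qed.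

Lemma Bsym Q u v : Q^T = Q -> Bf Q u v = Bf Q v u.
Proof.
move=> hQ; rewrite /Bf tr11 !trmx_mul trmxK hQ mulmxA //.
Qed.

Lemma BlinL Q a b u w v : Bf Q (a *: u - b *: w) v = a * Bf Q u v - b * Bf Q w v.
Proof.
rewrite /Bf; have -> : (a *: u - b *: w)^T = a *: u^T - b *: w^T by rewrite linearB /= !linearZ.
by rewrite /Bf !mulmxBl -!scalemxAl !mxE.
Qed.

Lemma BlinR Q a b u w v : Bf Q v (a *: u - b *: w) = a * Bf Q v u - b * Bf Q v w.
Proof.
by rewrite /Bf !mulmxBr -!scalemxAr !mxE.
Qed.

Lemma BQsum Q1 Q2 a b u v : Bf (a *: Q1 + b *: Q2) u v = a * Bf Q1 u v + b * Bf Q2 u v.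
Proof.
by rewrite /Bf mulmxDr mulmxDl -!scalemxAr -!scalemxAl !mxE.
Qed.

Lemma B0r Q u : Bf Q u 0 = 0.
Proof. by rewrite /Bf mulmx0 mxE. Qed.

Lemma Bpsd Q z : sym_pd Q -> 0 <= Bf Q z z.
Proof.
move=> [_ hp]; have [->|nz] := eqVneq z 0; first by rewrite B0r.
exact/ltW/hp.
Qed.

Lemma CS Q u y : sym_pd Q -> Bf Q u y ^+ 2 <= Bf Q u u * Bf Q y y.
Proof.
move=> hQ; have [->|nz] := eqVneq y 0; first by rewrite !B0r expr0n mulr0.
have c0 : 0 < Bf Q y y by case: hQ => _ /(_ y nz).
set c := Bf Q y y; set b := Bf Q u y.
have := Bpsd Q (c *: u - b *: y) hQ.
rewrite BlinL !BlinR (Bsym _ y u) ?(proj1 hQ) // -/c -/b.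
set a := Bf Q u u => h.
have : 0 <= c * (c * a - b ^+ 2) by move: h; rewrite expr2; lra.
by rewrite pmulr_rge0 // subr_ge0 mulrC.
Qed.

Lemma pd_unit Q : sym_pd Q -> Q \in unitmx.
Proof.
move=> [hs hp]; rewrite unitmxE unitfE; apply/negP => /det0P [v vn0 vQ].
have := hp v^T; rewrite trmx_eq0 => /(_ vn0).
by rewrite trmxK vQ mul0mx mxE ltxx.
Qed.


Lemma dot_bound Q x y : sym_pd Q -> (x^T *m invmx Q *m x) ord0 ord0 <= 1 ->
  dotv x y <= Num.sqrt (Bf Q y y).
Proof.
move=> hQ hx; have hU := pd_unit Q hQ; have hs := proj1 hQ.
set uu := invmx Q *m x.
have ex : x = Q *m uu by rewrite /uu mulKVmx.
have e1 : dotv x y = Bf Q uu y by rewrite /dotv /Bf ex trmx_mul hs.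
have e2 : (x^T *m invmx Q *m x) ord0 ord0 = Bf Q uu uu.
  by rewrite /Bf {1}ex trmx_mul hs -[_ *m invmx Q *m x]mulmxA.
rewrite e1; rewrite e2 in hx.
have a0 := Bpsd Q uu hQ; have c0 := Bpsd Q y hQ.
have h := CS Q uu y hQ.
have h2 : Bf Q uu y ^+ 2 <= Bf Q y y.
  apply: le_trans h _; rewrite ler_piMl //.
apply: le_trans (ler_norm _) _.
by rewrite -sqrtr_sqr ler_sqrt.
Qed.

Lemma ell0 Q : ellipsoid 0 Q 0.
Proof. by rewrite /ellipsoid /= subr0 trmx0 mul0mx mul0mx mxE. Qed.

Lemma sup_ell Q y : sym_pd Q ->
  0 <= support_fun (ellipsoid 0 Q) y /\ support_fun (ellipsoid 0 Q) y ^+ 2 <= Bf Q y y.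
Proof.
move=> hQ; set S := [set dotv x y | x in ellipsoid 0 Q].
have ub : ubound S (Num.sqrt (Bf Q y y)).
  move=> _ [x hx <-]; apply: dot_bound => //; move: hx; by rewrite /ellipsoid /= subr0.
have S0 : S (0 : R) by exists 0; [exact: ell0 | rewrite /dotv trmx0 mul0mx mxE].
have h1 : 0 <= sup S by apply: ub_le_sup => //; exists (Num.sqrt (Bf Q y y)).
have h2 : sup S <= Num.sqrt (Bf Q y y) by apply: ge_sup => //; exists 0.
rewrite /support_fun -/S; split => //.
have c0 := Bpsd Q y hQ.
rewrite -(sqr_sqrtr c0); have := sqrtr_ge0 (Bf Q y y); nra.
Qed.


Lemma entry_le (m n : nat) (z : 'M[R]_(m, n)) i j : `|z i j| <= `|z|.
Proof.
rewrite [leRHS]/Num.Def.normr /= mx_normrE; apply/bigmax_geP; right => /=; by exists (i, j).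
Qed.

Lemma K_ub (K : set 'cV[R]_d) y : compact K -> has_ubound [set dotv z y | z in K].
Proof.
move=> Kc; have [M [_ HM]] := compact_bounded Kc.
have HN : globally K [set x0 | `|x0| <= M + 1] by apply: HM; rewrite ltrDl.
exists ((M + 1) * \sum_i `|y i ord0|) => _ [z Kz <-].
rewrite /dotv mxE mulr_sumr; apply: le_trans (ler_norm _) _.
apply: le_trans (ler_norm_sum _ _ _) _; apply: ler_sum => i _.
rewrite mxE normrM; apply: ler_wpM2r => //.
apply: le_trans (entry_le _ _ z i ord0) _; exact: HN.
Qed.

End M.

Arguments Bf {R d}.

Theorem theorem1 (R : realType) (d : nat) (p beta : R) (Q1 Q2 : 'M[R]_d)
  (K : set 'cV[R]_d) :
  (1 <= d)%N -> 1 <= p -> p != 2 -> 0 < beta ->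
  sym_pd Q1 -> sym_pd Q2 ->
  is_firey_psum p (ellipsoid 0 Q1) (ellipsoid 0 Q2) K ->
  K `<=` ellipsoid 0 (powR (1 + beta^-1) p^-1 *: Q1 + powR (1 + beta) p^-1 *: Q2).
Proof.
move=> _ p1 _ b0 hQ1 hQ2 [Kc _ hK] x Kx.
have p0 : 0 < p by apply: lt_le_trans p1.
set a := powR (1 + beta^-1) p^-1; set b := powR (1 + beta) p^-1.
have a0 : 0 < a by apply: powR_gt0; rewrite addr_gt0 // invr_gt0.
have bb0 : 0 < b by apply: powR_gt0; rewrite addr_gt0.
set Qb := a *: Q1 + b *: Q2.
have hQb : sym_pd Qb.
  split.
    by rewrite /Qb linearD /= !linearZ /= (proj1 hQ1) (proj1 hQ2).
  move=> z nz; have := BQsum _ _ Q1 Q2 a b z z; rewrite /Bf => ->.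
  have := (proj2 hQ1) z nz; have := (proj2 hQ2) z nz.
  rewrite -/(Bf Q1 z z) -/(Bf Q2 z z) => h2 h1.
  by rewrite addr_gt0 // mulr_gt0.
have hU := pd_unit _ _ Qb hQb.
rewrite /ellipsoid /= subr0.
set y := invmx Qb *m x.
set t := (x^T *m invmx Qb *m x) ord0 ord0.
have et1 : t = dotv x y by rewrite /t /dotv /y mulmxA.
have et2 : t = Bf Qb y y.
  by rewrite /t /Bf /y trmx_mul trmx_inv (proj1 hQb) mulmxKV.
have t0 : 0 <= t by rewrite et2; exact: Bpsd.
have tK : t <= support_fun K y.
  by rewrite et1; apply: ub_le_sup; [exact: K_ub | exists x].
have [h10 h1c] := sup_ell _ _ Q1 y hQ1.
have [h20 h2c] := sup_ell _ _ Q2 y hQ2.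
move: tK; rewrite hK.
set h1 := support_fun (ellipsoid 0 Q1) y.
set h2 := support_fun (ellipsoid 0 Q2) y.
set H := h1 `^ p + h2 `^ p => tK.
have sc := @scalar_ineq R p beta h1 h2 p1 b0 h10 h20.
have e3 : Bf Qb y y = a * Bf Q1 y y + b * Bf Q2 y y by rewrite /Qb (BQsum _ _ Q1 Q2).
have sq : (H `^ p^-1) ^+ 2 = H `^ (p^-1 * 2) by rewrite -powR2 ?powR_ge0 // powRrM.
have hs0 := powR_ge0 H p^-1.
have : H `^ (p^-1 * 2) <= t.
  apply: le_trans sc _; rewrite -/a -/b et2 e3.
  by apply: lerD; apply: ler_wpM2l => //; apply: ltW.
rewrite -sq => ht.
have : t ^+ 2 <= (H `^ p^-1) ^+ 2 by rewrite lerXn2r // nnegrE.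
move: ht; rewrite !expr2; nra.
Qed.
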